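(* Assume $\operatorname{char}k=0$ or $\operatorname{char}k>N$, and let $V$ have homogeneous basis $x_1,\dots,x_d$. There is a homomorphism of superbialgebras $\varphi\colon\underline{\operatorname{end}}\,\mathsf S_N(V)\to\mathcal O(\mathsf E(V))$ with $\varphi(z^i_j)=x^i_j$ for all $i,j$; restricting the coaction of $\underline{\operatorname{end}}\,\mathsf S_N(V)$ on $V$ along $\varphi$ gives the coaction $x_j\mapsto\sum_ix_i\otimes x^i_j$.
   Context: $\mathsf S_N(V)=\mathsf T(V)/(c_{Y_N}(V^{\otimes N}))$ with $Y_N=\frac1{N!}\sum\operatorname{sgn}(\sigma)\sigma$ acting by the signed permutation action $c_\sigma(v_1\otimes\cdots\otimes v_N)=(-1)^{\sum_{(i,j)\in\mathrm{inv}(\sigma)}\hat v_i\hat v_j}v_{\sigma^{-1}(1)}\otimes\cdots\otimes v_{\sigma^{-1}(N)}$. For $\mathcal A=A(V,R)=\mathsf T(V)/(R)$, $\underline{\operatorname{end}}\,\mathcal A$ is the superbialgebra generated by $z^i_j=x^i\otimes x_j$ (parity $\hat i+\hat j$) with relations $c_{\pi_N}(R^\perp\otimes R)\subseteq(V^*\otimes V)^{\otimes N}$, $\Delta(z^i_j)=\sum_kz^i_k\otimes z^k_j$, $\varepsilon(z^i_j)=\delta^i_j$, coacting on $\mathcal A$ by $x_j\mapsto\sum_ix_i\otimes z^i_j$; here $R^\perp$ is the annihilator for $\langle f_1\otimes\cdots\otimes f_N,v_N\otimes\cdots\otimes v_1\rangle=\prod\langle f_i,v_i\rangle$ and $c_{\pi_N}(f_1\otimes\cdots\otimes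 f_N\otimes v_1\otimes\cdots\otimes v_N)=(-1)^{\sum_i\sum_{j>i}\hat v_i\hat f_j}(f_1\otimes v_1)\otimes\cdots\otimes(f_N\otimes v_N)$. $\mathcal O(\mathsf E(V))=k[x^i_j]$ is the free supercommutative superbialgebra on $x^i_j$ of parity $\hat i+\hat j$ with $\Delta(x^i_j)=\sum_kx^i_k\otimes x^k_j$, $\varepsilon(x^i_j)=\delta^i_j$. *)

(* Defs.v *)
From HB Require Import structures.
From mathcomp Require Import all_boot all_order all_algebra all_fingroup.
Set Implicit Arguments. Unset Strict Implicit. Unset Printing Implicit Defensive.
Import GRing.Theory.
Local Open Scope ring_scope.

(* Formal linear combinations (finitely supported k-valued functions),      *)
(* represented as lists of (coefficient, basis element) pairs; two of them  *)
(* are equal when all their coefficients agree.                             *)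
Section FS.
Variable k : fieldType.

Definition fs (X : Type) := seq (k * X).

Definition coef (X : eqType) (s : fs X) (x : X) : k :=
  \sum_(t <- s) (if t.2 == x then t.1 else 0).

Definition fs_eq (X : eqType) (s t : fs X) := forall x, coef s x = coef t x.

Definition fscale (X : Type) (c : k) (s : fs X) : fs X :=
  [seq (c * t.1, t.2) | t <- s].

Definition fsub (X : Type) (s t : fs X) : fs X := s ++ fscale (-1) t.

Definition ftens (X Y : Type) (s : fs X) (t : fs Y) : fs (X * Y) :=
  [seq (a.1 * b.1, (a.2, b.2)) | a <- s, b <- t].

(* Free (tensor) algebra T(W) on a set of generators G: basis = words. *)
Definition fone (G : Type) : fs (seq G) := [:: (1, [::])].
Definition gen (G : Type) (g : G) : fs (seq G) := [:: (1, [:: g])].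
Definition fmul (G : Type) (s t : fs (seq G)) : fs (seq G) :=
  [seq (a.1 * b.1, a.2 ++ b.2) | a <- s, b <- t].

Definition parw (G : Type) (par : G -> bool) (w : seq G) : bool :=
  foldr (fun g b => par g (+) b) false w.

(* super tensor product T(W) (x) T(W), with the Koszul sign
   (a (x) b)(c (x) d) = (-1)^{|b||c|} ac (x) bd *)
Definition tone (G : Type) : fs (seq G * seq G) := [:: (1, ([::], [::]))].
Definition tmul (G : Type) (par : G -> bool) (s t : fs (seq G * seq G)) :
    fs (seq G * seq G) :=
  [seq ((-1) ^+ (parw par a.2.2 && parw par b.2.1) * (a.1 * b.1),
        (a.2.1 ++ b.2.1, a.2.2 ++ b.2.2)) | a <- s, b <- t].

Definition in_ideal (G : eqType) (Rel : fs (seq G) -> Prop) (x : fs (seq G)) :=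
  exists l : seq (fs (seq G) * fs (seq G) * fs (seq G)),
    (forall t, t \in l -> Rel t.1.2) /\
    fs_eq x (flatten [seq fmul (fmul t.1.1 t.1.2) t.2 | t <- l]).

(* the ideal I (x) T + T (x) I of T (x) T, I generated by Rel *)
Definition in_ideal2 (G : eqType) (Rel : fs (seq G) -> Prop)
    (x : fs (seq G * seq G)) :=
  exists l1 l2 : seq (fs (seq G) * fs (seq G) * fs (seq G) * fs (seq G)),
    (forall t, t \in l1 -> Rel t.1.1.2) /\
    (forall t, t \in l2 -> Rel t.1.1.2) /\
    fs_eq x (flatten [seq ftens (fmul (fmul t.1.1.1 t.1.1.2) t.1.2) t.2 | t <- l1]
             ++ flatten [seq ftens t.2 (fmul (fmul t.1.1.1 t.1.1.2) t.1.2) | t <- l2]).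

Definition phi_ext (GS GT : Type) (phi : GS -> fs (seq GT)) (s : fs (seq GS)) :
    fs (seq GT) :=
  flatten [seq fscale t.1 (foldr (fun g acc => fmul (phi g) acc) (fone GT) t.2)
          | t <- s].

Definition phiphi (GS GT : Type) (phi : GS -> fs (seq GT))
    (s : fs (seq GS * seq GS)) : fs (seq GT * seq GT) :=
  flatten [seq fscale t.1 (ftens (phi_ext phi [:: (1, t.2.1)])
                                 (phi_ext phi [:: (1, t.2.2)])) | t <- s].

Definition Dext (G : Type) (par : G -> bool) (D : G -> fs (seq G * seq G))
    (s : fs (seq G)) : fs (seq G * seq G) :=
  flatten [seq fscale t.1 (foldr (fun g acc => tmul par (D g) acc) (tone G) t.2)
          | t <- s].

Definition eext (G : Type) (e : G -> k) (s : fs (seq G)) : k :=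
  \sum_(t <- s) t.1 * \prod_(g <- t.2) e g.

(* A presented superbialgebra is given by generators GS with parities parS,
   relations RelS, and coproduct / counit on generators DS, eS (the algebra
   is T(W_S)/(RelS)).  [is_sbialg_hom ... phi] says that the assignment of
   images phi to generators defines a homomorphism of superbialgebras
   T(W_S)/(RelS) -> T(W_T)/(RelT): it is parity preserving, kills the
   relations (so is a well defined superalgebra map), and is compatible with
   coproducts and counits (it suffices to check these on generators, since
   all maps involved are superalgebra maps). *)
Definition is_sbialg_hom (GS GT : eqType) (parS : GS -> bool) (parT : GT -> bool)
    (RelS : fs (seq GS) -> Prop) (RelT : fs (seq GT) -> Prop)
    (DS : GS -> fs (seq GS * seq GS)) (DT : GT -> fs (seq GT * seq GT))
    (eS : GS -> k) (eT : GT -> k) (phi : GS -> fs (seq GT)) : Prop :=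
  [/\ forall g w, coef (phi g) w != 0 -> parw parT w = parS g,
      forall r, RelS r -> in_ideal RelT (phi_ext phi r),
      forall g, in_ideal2 RelT (fsub (Dext parT DT (phi g)) (phiphi phi (DS g)))
    & forall g, eext eT (phi g) = eS g].

End FS.

(* The specific objects: V with homogeneous basis x_1..x_d of parities p.   *)
Section EndS.
Variables (k : fieldType) (d N : nat) (p : 'I_d -> bool).

(* generators z^i_j of end, resp. x^i_j of O(E(V)), indexed by (i,j) *)
Definition Gen := ('I_d * 'I_d)%type.
Definition parG (g : Gen) : bool := p g.1 (+) p g.2.

(* basis words of V^{(x)N} : x_{w 1} (x) ... (x) x_{w N} *)
Definition Word := {ffun 'I_N -> 'I_d}.
Definition Ten := {ffun Word -> k}.

(* sign (-1)^{sum_{(i,j) in inv sigma} \hat v_i \hat v_j} *)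
Definition sgn_perm (s : 'S_N) (w : Word) : k :=
  (-1) ^+ (\sum_(i : 'I_N) \sum_(j : 'I_N | (i < j)%N && (s j < s i)%N)
              (p (w i) && p (w j)))%N.

Definition cperm (s : 'S_N) (t : Ten) : Ten :=
  [ffun w' => \sum_(w : Word)
      (if w' == [ffun i => w ((s^-1)%g i)] then sgn_perm s w * t w else 0)].

Definition cY (t : Ten) : Ten :=
  [ffun w => ((N`!)%:R)^-1 * \sum_(s : 'S_N) (-1) ^+ odd_perm s * cperm s t w].

Definition inR (v : Ten) : Prop := exists t, v = cY t.

(* (Vdual)^{(x)N} in the dual basis x^{a 1} (x) ... (x) x^{a N}; pairing
   <f_1 (x) .. (x) f_N, v_N (x) .. (x) v_1> = prod <f_i, v_i> *)
Definition revw (a : Word) : Word := [ffun i => a (rev_ord i)].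
Definition pairing (f v : Ten) : k := \sum_(a : Word) f a * v (revw a).
Definition inRperp (f : Ten) : Prop := forall v, inR v -> pairing f v = 0.

(* c_{pi_N}(f (x) v) as an element of T(Vdual (x) V), x^i (x) x_j = z^i_j *)
Definition sgn_pi (a b : Word) : k :=
  (-1) ^+ (\sum_(i : 'I_N) \sum_(j : 'I_N | (i < j)%N) (p (b i) && p (a j)))%N.
Definition zword (a b : Word) : seq Gen := [seq (a i, b i) | i <- enum 'I_N].
Definition cpi (f v : Ten) : fs k (seq Gen) :=
  [seq (f a * v b * sgn_pi a b, zword a b) | a <- enum {: Word}, b <- enum {: Word}].

Definition Rel_end (r : fs k (seq Gen)) : Prop :=
  exists f v, [/\ inRperp f, inR v & r = cpi f v].

(* relations of the free supercommutative algebra O(E(V)) = k[x^i_j] *)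
Definition Rel_O (r : fs k (seq Gen)) : Prop :=
  (exists g h : Gen, r = fsub (fmul (gen k g) (gen k h))
       (fscale ((-1) ^+ (parG g && parG h)) (fmul (gen k h) (gen k g))))
  \/ (exists g : Gen, parG g /\ r = fmul (gen k g) (gen k g)).

Definition DeltaGen (g : Gen) : fs k (seq Gen * seq Gen) :=
  [seq (1, ([:: (g.1, l)], [:: (l, g.2)])) | l <- enum 'I_d].
Definition epsGen (g : Gen) : k := (g.1 == g.2)%:R.

(* restriction along phi of the coaction x_j |-> sum_i x_i (x) z^i_j
   on V, as an element of V (x) T(W) *)
Definition coact_restr (phi : Gen -> fs k (seq Gen)) (j : 'I_d) :
    fs k ('I_d * seq Gen) :=
  flatten [seq [seq (c.1, (i, c.2)) | c <- phi (i, j)] | i <- enum 'I_d].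

Definition coact_target (j : 'I_d) : fs k ('I_d * seq Gen) :=
  [seq (1, (i, [:: (i, j)])) | i <- enum 'I_d].

End EndS.

(* Main.v *)
Require Import Defs.
From HB Require Import structures.
From mathcomp Require Import all_boot all_order all_algebra all_fingroup.
From Stdlib Require Import Lia.
Import GRing.Theory.
Local Open Scope ring_scope.
Set Implicit Arguments. Unset Strict Implicit. Unset Printing Implicit Defensive.

Section FSL.
Variable k : fieldType.

Lemma fc_nil (X : eqType) (x : X) : coef ([::] : fs k X) x = 0.
Proof. by rewrite /coef big_nil. Qed.

Lemma fc_cons (X : eqType) (t : k * X) s x :
  coef (t :: s) x = (if t.2 == x then t.1 else 0) + coef s x.
Proof. by rewrite /coef big_cons. Qed.

Lemma fc_cat (X : eqType) (s t : fs k X) x : coef (s ++ t) x = coef s x + coef t x.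
Proof. by rewrite /coef big_cat. Qed.

Lemma fc_scale (X : eqType) c (s : fs k X) x : coef (fscale c s) x = c * coef s x.
Proof.
rewrite /coef /fscale big_map mulr_sumr; apply: eq_bigr => t _ /=.
by case: ifP; rewrite ?mulr0.
Qed.

Lemma fc_sub (X : eqType) (s t : fs k X) x : coef (fsub s t) x = coef s x - coef t x.
Proof. by rewrite /fsub fc_cat fc_scale mulN1r. Qed.

Lemma fc_flatten (I : Type) (X : eqType) (F : I -> fs k X) (l : seq I) x :
  coef (flatten [seq F i | i <- l]) x = \sum_(i <- l) coef (F i) x.
Proof.
elim: l => [|i l IH] /=; first by rewrite fc_nil big_nil.
by rewrite fc_cat IH big_cons.
Qed.

Lemma fmul_scalel (G : Type) c (s t : fs k (seq G)) :
  fmul (fscale c s) t = fscale c (fmul s t).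
Proof.
elim: s => [|a s IH] //=.
rewrite /fmul /= in IH *. rewrite IH /fscale map_cat -!map_comp.
congr (_ ++ _); apply: eq_map => b /=; by rewrite mulrA.
Qed.

Definition lc (I : finType) (X : Type) (c : I -> k) (x : I -> fs k X) : fs k X :=
  flatten [seq fscale (c i) (x i) | i <- enum I].

Lemma fc_lc (I : finType) (X : eqType) (c : I -> k) (x : I -> fs k X) w :
  coef (lc c x) w = \sum_i c i * coef (x i) w.
Proof.
rewrite /lc fc_flatten big_enum /=; apply: eq_bigr => i _; exact: fc_scale.
Qed.

Section Ideal.
Variable G : eqType.
Variable Rel : fs k (seq G) -> Prop.
Local Notation J := (in_ideal Rel).

Lemma fs_eq_sym (X : eqType) (s t : fs k X) : fs_eq s t -> fs_eq t s.
Proof. by move=> H x; rewrite H. Qed.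

Lemma J_eq x y : fs_eq x y -> J x -> J y.
Proof. by move=> Hxy [l [Hl Hx]]; exists l; split=> // w; rewrite -Hxy. Qed.

Lemma J_nil : J [::].
Proof. by exists [::]; split. Qed.

Lemma J_cat x y : J x -> J y -> J (x ++ y).
Proof.
move=> [l1 [H1 E1]] [l2 [H2 E2]]; exists (l1 ++ l2); split.
  by move=> t; rewrite mem_cat => /orP [/H1|/H2].
by move=> w; rewrite fc_cat map_cat flatten_cat fc_cat E1 E2.
Qed.

Lemma J_scale c x : J x -> J (fscale c x).
Proof.
move=> [l [Hl E]]; exists [seq ((fscale c t.1.1, t.1.2), t.2) | t <- l]; split.
  move=> t /mapP [t' Ht' ->]; exact: (Hl _ Ht').
move=> w; rewrite fc_scale E -map_comp !fc_flatten mulr_sumr.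
by apply: eq_bigr => t _ /=; rewrite !fmul_scalel fc_scale.
Qed.

Lemma J_gen A r B : Rel r -> J (fmul (fmul A r) B).
Proof.
move=> Hr; exists [:: (A, r, B)]; split.
  by move=> t; rewrite inE => /eqP ->.
by move=> w; rewrite /= cats0.
Qed.

Lemma J_lc (I : finType) (c : I -> k) (x : I -> fs k (seq G)) :
  (forall i, J (x i)) -> J (lc c x).
Proof.
move=> H; rewrite /lc; elim: (enum I) => [|i l IH] /=; first exact: J_nil.
by apply: J_cat => //; apply: J_scale.
Qed.

Definition eqv x y := J (fsub x y).

Lemma eqv_fseq x x' y y' : fs_eq x x' -> fs_eq y y' -> eqv x y -> eqv x' y'.
Proof. by move=> E1 E2; apply: J_eq => w; rewrite !fc_sub E1 E2. Qed.

Lemma eqv_refl x : eqv x x.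
Proof. by apply: J_eq J_nil => w; rewrite fc_sub fc_nil subrr. Qed.

Lemma eqv_trans x y z : eqv x y -> eqv y z -> eqv x z.
Proof.
move=> H1 H2; apply: J_eq (J_cat H1 H2) => w.
by rewrite fc_cat !fc_sub addrA subrK.
Qed.

Lemma eqv_scale c x y : eqv x y -> eqv (fscale c x) (fscale c y).
Proof.
move=> H; apply: J_eq (J_scale c H) => w.
by rewrite fc_scale !fc_sub !fc_scale mulrBr.
Qed.

Lemma eqv_lc (I : finType) (c : I -> k) (x y : I -> fs k (seq G)) :
  (forall i, eqv (x i) (y i)) -> eqv (lc c x) (lc c y).
Proof.
move=> H; apply: J_eq (J_lc c H) => w.
rewrite fc_sub !fc_lc -sumrB; apply: eq_bigr => i _.
by rewrite fc_sub mulrBr.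
Qed.

Lemma J_eqv0 x : eqv x [::] -> J x.
Proof. by apply: J_eq => w; rewrite fc_sub fc_nil subr0. Qed.

End Ideal.
End FSL.

Section Perm.
Variable N : nat.

Definition Kc (c : 'I_N -> 'I_N -> nat) (s : 'S_N) : nat :=
  (\sum_(x : 'I_N) \sum_(y : 'I_N | (x < y)%N && (s y < s x)%N) c (s x) (s y))%N.

Lemma tperm_ord (i i' x y : 'I_N) : nat_of_ord i' = (nat_of_ord i).+1 ->
  ~~ ((x == i) && (y == i')) -> ~~ ((x == i') && (y == i)) ->
  (tperm i i' x < tperm i i' y)%N = (x < y)%N.
Proof.
move=> Hi H1 H2.
have H1' : ~ (nat_of_ord x = nat_of_ord i /\ nat_of_ord y = (nat_of_ord i).+1).
  by move=> [E1 E2]; move/negP: H1; apply; rewrite -!val_eqE /= E1 E2 Hi !eqxx.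
have H2' : ~ (nat_of_ord x = (nat_of_ord i).+1 /\ nat_of_ord y = nat_of_ord i).
  by move=> [E1 E2]; move/negP: H2; apply; rewrite -!val_eqE /= E1 E2 Hi !eqxx.
have ne : forall a b : 'I_N, a <> b -> nat_of_ord a <> nat_of_ord b by move=> a b H E; apply: H; apply: val_inj.
case: tpermP => [Ex|Ex|Hx1 Hx2]; case: tpermP => [Ey|Ey|Hy1 Hy2];
  rewrite ?Ex ?Ey in H1' H2' *;
  repeat match goal with H : ?a <> ?b |- _ => move: (ne _ _ H); clear H => H end;
  rewrite ?Hi in H1' H2' *;
  apply/idP/idP => /ltP H; apply/ltP; rewrite ?Hi in H *; lia.
Qed.

Lemma Kc_step (c : 'I_N -> 'I_N -> nat) (s : 'S_N) (i i' : 'I_N) :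
  nat_of_ord i' = (nat_of_ord i).+1 -> (s i' < s i)%N ->
  Kc c s = (Kc c (tperm i i' * s) + c (s i) (s i'))%N.
Proof.
move=> Hi Hs; rewrite /Kc.
pose t := tperm i i'.
have -> : (\sum_(x : 'I_N) \sum_(y : 'I_N | (x < y)%N && ((t * s)%g y < (t * s)%g x)%N)
             c ((t * s)%g x) ((t * s)%g y) =
           \sum_(x : 'I_N) \sum_(y : 'I_N | (t x < t y)%N && (s y < s x)%N) c (s x) (s y))%N.
  rewrite (reindex_inj (@perm_inj _ t)) /=; apply: eq_bigr => x _.
  rewrite (reindex_inj (@perm_inj _ t)) /=.
  by apply: eq_big => [y|y _]; rewrite !permM !tpermK.
have -> : (c (s i) (s i') = \sum_(x : 'I_N) \sum_(y : 'I_N | (x == i) && (y == i')) c (s x) (s y))%N.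
  rewrite (bigD1 i) //= (big_pred1 i'); last by move=> y; rewrite eqxx.
  rewrite big1 ?addn0 // => x /negbTE Hx; rewrite big1 // => y; by rewrite Hx.
rewrite -(big_split addn) /=. apply: eq_bigr => x _.
rewrite !(big_mkcond (fun y => _ && _)) -big_split /=; apply: eq_bigr => y _.
have [/andP [/eqP Ex /eqP Ey]|N1] := boolP ((x == i) && (y == i')).
  by rewrite Ex Ey ?eqxx /t tpermL tpermR Hs /= Hi ltnSn ltnNge leqnSn.
rewrite addn0.
have [/andP [/eqP Ex /eqP Ey]|N2] := boolP ((x == i') && (y == i)).
  by rewrite Ex Ey /t tpermL tpermR /= [(s i < _)%N]ltnNge (ltnW Hs) !andbF.
by rewrite tperm_ord.
Qed.

Definition ninv (s : 'S_N) := Kc (fun _ _ => 1%N) s.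

Lemma desc_or_mono (s : 'S_N) :
  (exists i i' : 'I_N, nat_of_ord i' = (nat_of_ord i).+1 /\ (s i' < s i)%N) \/
  (forall x y : 'I_N, (x < y)%N -> (s x < s y)%N).
Proof.
case: (boolP [exists i : 'I_N, exists i' : 'I_N,
                 (nat_of_ord i' == (nat_of_ord i).+1) && (s i' < s i)%N]).
  move/existsP => [i /existsP [i' /andP [/eqP H1 H2]]]; left; by exists i, i'.
rewrite negb_exists => /forallP Hn; right.
have adj : forall x y : 'I_N, nat_of_ord y = (nat_of_ord x).+1 -> (s x < s y)%N.
  move=> x y Hxy; move: (Hn x); rewrite negb_exists => /forallP /(_ y).
  rewrite Hxy eqxx /= -leqNgt leq_eqVlt => /orP [/eqP E|//].
  have : y = x by apply: (@perm_inj _ s); apply: val_inj.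
  move/(congr1 val) => /= E1; lia.
have gen : forall n (x y : 'I_N), nat_of_ord y = (nat_of_ord x + n.+1)%N -> (s x < s y)%N.
  elim=> [|n IH] x y Hxy; first by apply: adj; rewrite Hxy addn1.
  have Hz : (nat_of_ord x + n.+1 < N)%N.
    by apply: ltn_trans (ltn_ord y); rewrite Hxy !addnS.
  have H1 := IH x (Ordinal Hz) erefl.
  apply: (ltn_trans H1); apply: adj; rewrite /= Hxy addnS. done.
move=> x y Hxy; apply: (gen (y - x.+1)%N); by rewrite addnS -addSn subnKC.
Qed.

Lemma mono_ge (s : 'S_N) : (forall x y : 'I_N, (x < y)%N -> (s x < s y)%N) ->
  forall x : 'I_N, (x <= s x)%N.
Proof.
move=> Hm x; have [n Hn] : exists n, nat_of_ord x = n by exists (nat_of_ord x).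
elim: n x Hn => [|n IH] x Hx; first by rewrite Hx.
have Hz : (n < N)%N by rewrite (leq_trans _ (ltn_ord x)) // Hx.
have H2 := IH (Ordinal Hz) erefl.
have H1 : (s (Ordinal Hz) < s x)%N by apply: Hm; rewrite /= Hx.
rewrite Hx; exact: leq_ltn_trans H2 H1.
Qed.

Lemma mono_id (s : 'S_N) : (forall x y : 'I_N, (x < y)%N -> (s x < s y)%N) -> s = 1%g.
Proof.
move=> Hm; apply/permP => x; rewrite perm1.
have Hm' : forall x y : 'I_N, (x < y)%N -> ((s^-1)%g x < (s^-1)%g y)%N.
  move=> a b Hab; rewrite ltnNge leq_eqVlt; apply/negP => /orP [/eqP E|H].
    have Eab : a = b by apply: (@perm_inj _ (s^-1)%g); apply: val_inj; rewrite /= E.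
    by move: Hab; rewrite Eab ltnn.
  by move: (Hm _ _ H); rewrite !permKV => /(ltn_trans Hab); rewrite ltnn.
apply: val_inj; apply/eqP; rewrite eqn_leq; apply/andP; split; last exact: mono_ge.
by have := mono_ge Hm' (s x); rewrite permK.
Qed.

Lemma enum_split (i i' : 'I_N) : nat_of_ord i' = (nat_of_ord i).+1 ->
  exists s1 s2, enum 'I_N = s1 ++ i :: i' :: s2.
Proof.
move=> Hi; set e := enum 'I_N.
have Hs : size e = N by rewrite size_enum_ord.
exists (take i e), (drop i.+2 e).
rewrite -{1}(cat_take_drop i e); congr (_ ++ _).
rewrite (drop_nth i); last by rewrite Hs.
rewrite (drop_nth i); last by rewrite Hs -Hi.
by rewrite nth_ord_enum -Hi nth_ord_enum.
Qed.

Lemma word_swap (X : Type) (F : 'I_N -> X) (i i' : 'I_N) :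
  nat_of_ord i' = (nat_of_ord i).+1 ->
  exists u u', [seq F x | x <- enum 'I_N] = u ++ F i :: F i' :: u' /\
    [seq F (tperm i i' x) | x <- enum 'I_N] = u ++ F i' :: F i :: u'.
Proof.
move=> Hi; have [s1 [s2 E]] := enum_split Hi.
have U := enum_uniq 'I_N; rewrite E cat_uniq /= in U.
case/and3P: U => _ /norP [/negP Ni1 /norP [/negP Ni'1 _]] /andP [/norP [_ Ni2] /andP [Ni'2 _]].
have ne : i != i'.
  by apply/negP => /eqP/(congr1 val) /= E'; lia.
exists [seq F x | x <- s1], [seq F x | x <- s2]; rewrite E !map_cat /= tpermL tpermR; split=> //.
congr (_ ++ _ :: _ :: _); apply/eq_in_map => x Hx; rewrite tpermD //.
- by apply/negP => /eqP Ex; apply: Ni1; rewrite Ex.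
- by apply/negP => /eqP Ex; apply: Ni'1; rewrite Ex.
- have Ni2' : i \notin s2 := Ni2.
  by apply/negP => /eqP Ex; move: Ni2'; rewrite Ex Hx.
- have Ni2' : i' \notin s2 := Ni'2.
  by apply/negP => /eqP Ex; move: Ni2'; rewrite Ex Hx.
Qed.
End Perm.

Section Main.
Variables (k : fieldType) (d N : nat) (p : 'I_d -> bool).
Local Notation G := (Gen d).
Local Notation RO := (@Rel_O k d p).
Local Notation eqvO := (@eqv k _ RO).

Lemma swapO (u u' : seq G) (g h : G) :
  eqvO [:: (1, u ++ g :: h :: u')]
       [:: ((-1) ^+ (parG p g && parG p h), u ++ h :: g :: u')].
Proof.
set e := (-1) ^+ _.
have HR : RO (fsub (fmul (gen k g) (gen k h)) (fscale e (fmul (gen k h) (gen k g)))).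
  by left; exists g, h.
apply: J_eq (J_gen [:: (1, u)] [:: (1, u')] HR) => w.
rewrite /fmul /fsub /fscale /gen /=.
rewrite !fc_cons !fc_nil /= -!catA /= !mul1r !mulr1 !addr0.
done.
Qed.

Definition word (F : 'I_N -> G) : seq G := [seq F x | x <- enum 'I_N].
Definition KW (s : 'S_N) (W : 'I_N -> G) : nat :=
  Kc (fun a b => (parG p (W a) && parG p (W b) : nat)) s.

Lemma wordP (W : 'I_N -> G) (s : 'S_N) :
  eqvO [:: (1, word (fun x => W (s x)))] [:: ((-1) ^+ KW s W, word W)].
Proof.
suff H : forall n (s : 'S_N), (ninv s <= n)%N ->
  eqvO [:: (1, word (fun x => W (s x)))] [:: ((-1) ^+ KW s W, word W)].
  exact: (H _ s (leqnn _)).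
have Mono : forall s : 'S_N, (forall x y : 'I_N, (x < y)%N -> (s x < s y)%N) ->
  eqvO [:: (1, word (fun x => W (s x)))] [:: ((-1) ^+ KW s W, word W)].
  move=> {}s Hm; have -> := mono_id Hm.
  have -> : KW 1 W = 0%N.
    rewrite /KW /Kc big1 // => x _; rewrite big_pred0 // => y; rewrite !perm1.
    by case: (ltngtP x y).
  have -> : word (fun x => W ((1 : 'S_N)%g x)) = word W by apply: eq_map => x; rewrite perm1.
  by rewrite expr0; apply: eqv_refl.
elim=> [|n IH] {}s Hn; (case: (desc_or_mono s) => [[i [i' [Hi Hd]]] | Hm]; last exact: Mono).
- by move: Hn; rewrite /ninv (Kc_step _ Hi Hd) addn1.
- pose s' := (tperm i i' * s)%g.
  have Hn' : (ninv s' <= n)%N by move: Hn; rewrite /ninv (Kc_step _ Hi Hd) addn1.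
  have IH' := IH s' Hn'.
  have [u [u' [E1 E2]]] := word_swap (fun x => W (s x)) Hi.
  have E3 : word (fun x => W (s' x)) = u ++ W (s i') :: W (s i) :: u'.
    by rewrite -E2; apply: eq_map => x; rewrite /s' permM.
  set b := (parG p (W (s i)) && parG p (W (s i'))).
  have Sw := swapO u u' (W (s i)) (W (s i')).
  rewrite /word E1; apply: (eqv_trans Sw).
  have := eqv_scale ((-1) ^+ b) IH'; rewrite /fscale /= mulr1; rewrite E3.
  suff -> : (-1) ^+ b * (-1) ^+ KW s' W = (-1) ^+ KW s W :> k by [].
  by rewrite -exprD /KW (Kc_step _ Hi Hd) addnC.
Qed.
End Main.

Section Easy.
Variables (k : fieldType) (d N : nat) (p : 'I_d -> bool).
Local Notation G := (Gen d).

Lemma foldr_gen (w : seq G) :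
  foldr (fun g acc => fmul (gen k g) acc) (fone k G) w = [:: (1, w)].
Proof. by elim: w => //= g w ->; rewrite /fmul /gen /= mul1r. Qed.

Lemma phi_ext_gen (s : fs k (seq G)) : phi_ext (@gen k G) s = s.
Proof.
rewrite /phi_ext; elim: s => //= [[c w] s] IH.
by rewrite foldr_gen /fscale /= mulr1 IH.
Qed.

Lemma tmul_tone (par : G -> bool) (s : fs k (seq G * seq G)) :
  tmul par s (tone k G) = s.
Proof.
elim: s => //= [[c [w1 w2]] s] IH; rewrite /tmul /= in IH *.
by rewrite IH andbF expr0 mul1r mulr1 !cats0.
Qed.

Lemma Dext_gen (par : G -> bool) (D : G -> fs k (seq G * seq G)) (g : G) :
  Dext par D (gen k g) = D g.
Proof.
rewrite /Dext /gen /= cats0 tmul_tone.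
rewrite /fscale; elim: (D g) => //= [[c w] s] ->; by rewrite mul1r.
Qed.

Lemma phiphi_gen (s : fs k (seq G * seq G)) : phiphi (@gen k G) s = s.
Proof.
rewrite /phiphi; elim: s => [|[c [w1 w2]] s IH] //=.
rewrite IH /phi_ext /= !foldr_gen /fscale /ftens /= !mulr1. done.
Qed.

Lemma coact_gen (j : 'I_d) : coact_restr (@gen k G) j = coact_target k j.
Proof. by rewrite /coact_restr /coact_target; elim: (enum 'I_d) => //= i l ->. Qed.

End Easy.

Section Core.
Variables (k : fieldType) (d N : nat) (p : 'I_d -> bool).
Local Notation W := (Word d N).
Local Notation sp := (@sgn_perm k d N p).

Definition rs (s : 'S_N) (w : W) : W := [ffun j => w ((s^-1)%g j)].
Definition ls (s : 'S_N) (a : W) : W := [ffun i => a (s i)].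
Definition sg (s : 'S_N) : k := (-1) ^+ odd_perm s.
Definition rho : 'S_N := perm (@rev_ord_inj N).

Lemma rhoE x : rho x = rev_ord x.
Proof. by rewrite permE. Qed.

Lemma rhoK x : rho (rho x) = x.
Proof. by rewrite !rhoE rev_ordK. Qed.

Lemma rhoV : (rho^-1)%g = rho.
Proof. by apply/permP => x; rewrite -{1}(rhoK x) permK. Qed.

Lemma rho_lt (x y : 'I_N) : (rho x < rho y)%N = (y < x)%N.
Proof.
rewrite !rhoE /=; have := ltn_ord x; have := ltn_ord y.
rewrite -!minusE; move=> /ltP Hy /ltP Hx; apply/idP/idP => /ltP H; apply/ltP; lia.
Qed.

Lemma revwK (a : W) : revw (revw a) = a.
Proof. by apply/ffunP => i; rewrite !ffunE rev_ordK. Qed.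

Lemma sp_conj (t : 'S_N) (u : W) : sp (rho * t * rho)%g (revw u) = sp t u.
Proof.
rewrite /sgn_perm; congr (_ ^+ _).
rewrite (reindex_inj (@perm_inj _ rho)) /=.
rewrite (eq_bigr (fun i : 'I_N => \sum_(j : 'I_N | (j < i)%N && (t i < t j)%N) (p (u i) && p (u j)))%N); last first.
  move=> i _; rewrite (reindex_inj (@perm_inj _ rho)) /=.
  apply: eq_big => [j|j _]; first by rewrite !permM !rhoK !rho_lt.
  by rewrite !ffunE -!rhoE !rhoK.
rewrite (eq_bigr (fun i : 'I_N => \sum_(j : 'I_N) if (j < i)%N && (t i < t j)%N then (p (u i) && p (u j) : nat) else 0%N)); last by move=> i _; rewrite big_mkcond.
rewrite exchange_big /=; apply eq_bigr => i _; rewrite [RHS]big_mkcond; apply eq_bigr => j _.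
by rewrite [p (u j) && _]andbC.
Qed.

Lemma revw_inj : injective (@revw d N).
Proof. by move=> a b E; rewrite -(revwK a) E revwK. Qed.

Lemma rs_conj (t : 'S_N) (u : W) : revw (rs (rho * t * rho)%g (revw u)) = rs t u.
Proof.
apply/ffunP => i; rewrite /revw /rs !ffunE !invMg rhoV !permM -!rhoE rhoK.
by rewrite rhoK.
Qed.

Lemma sg_conj (t : 'S_N) : sg (rho * t * rho)%g = sg t.
Proof. by rewrite /sg !odd_permM addbC addbA addbb. Qed.

Lemma ortho (f : Ten k d N) (u : W) : inRperp p f ->
  \sum_(s : 'S_N) (N`!%:R)^-1 * (sg s * (sp s u * f (rs s u))) = 0.
Proof.
move=> Hf; pose t0 : Ten k d N := [ffun w => (w == revw u)%:R].
have H0 := Hf (cY p t0) (ex_intro _ t0 erefl).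
transitivity (pairing f (cY p t0)); last exact: H0.
rewrite /pairing.
have cp : forall (s : 'S_N) (b : W),
    cperm p s t0 b = if b == rs s (revw u) then sp s (revw u) else 0.
  move=> s b; rewrite ffunE (bigD1 (revw u)) //= big1 => [|w Hw].
    by rewrite ffunE eqxx mulr1 addr0.
  by rewrite ffunE (negbTE Hw) mulr0; case: ifP.
under [RHS]eq_bigr => a _ do rewrite /cY ffunE big_distrr /= big_distrr /=.
rewrite exchange_big /=.
have inj : injective (fun t : 'S_N => (rho * t * rho)%g).
  by move=> a b E; apply: (mulgI rho); apply: (mulIg rho).
rewrite [RHS](reindex_inj inj) /=; apply: eq_bigr => t _.
rewrite (bigD1 (rs t u)) //= big1 ?addr0; last first.
  move=> i Hi; rewrite cp; case: eqP => [E|_]; last by rewrite !mulr0.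
  by move: Hi; rewrite -(rs_conj t u) -E revwK eqxx.
rewrite cp -(rs_conj t u) revwK eqxx sp_conj -/(sg _) sg_conj.
by rewrite [RHS]mulrC -!mulrA.
Qed.

Lemma even_sum (I : finType) (F : I -> nat) : (forall i, ~~ odd (F i)) -> ~~ odd (\sum_i F i)%N.
Proof.
move=> H; apply: (big_ind (fun n => ~~ odd n)) => //.
by move=> a b Ha Hb; rewrite oddD (negbTE Ha) (negbTE Hb).
Qed.

Lemma sum_pairs (F : 'I_N -> 'I_N -> nat) :
  (forall x y : 'I_N, (x < y)%N -> ~~ odd (F x y + F y x)%N) ->
  (forall x, ~~ odd (F x x)) -> ~~ odd (\sum_(x : 'I_N) \sum_(y : 'I_N) F x y)%N.
Proof.
move=> Hxy Hxx.
have E1 : (\sum_(x : 'I_N) \sum_(y : 'I_N) F x y =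
            \sum_(x : 'I_N) \sum_(y : 'I_N) (if (x < y)%N then F x y else 0) +
            \sum_(x : 'I_N) \sum_(y : 'I_N) (if (y < x)%N then F x y else 0) +
            \sum_(x : 'I_N) \sum_(y : 'I_N) (if x == y then F x y else 0))%N.
  rewrite -!big_split /=; apply: eq_bigr => x _; rewrite -!big_split /=.
  apply: eq_bigr => y _; have [->|nxy] := eqVneq x y; first by rewrite ltnn.
  rewrite addn0; case: (ltngtP x y) => H; rewrite ?addn0 ?add0n //.
  by move: nxy; rewrite -val_eqE /= H eqxx.
have E2 : (\sum_(x : 'I_N) \sum_(y : 'I_N) (if (y < x)%N then F x y else 0) =
           \sum_(x : 'I_N) \sum_(y : 'I_N) (if (x < y)%N then F y x else 0))%N.
  by rewrite exchange_big.
rewrite E1 E2 -big_split /= oddD.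
rewrite [odd (\sum_(x : 'I_N) \sum_(y : 'I_N) (if x == y then _ else _))](negbTE (even_sum _)); last first.
  move=> x; apply: even_sum => y; case: eqP => [->|]; by [apply: Hxx|].
rewrite (negbTE (even_sum _)) //.
move=> x; rewrite -big_split; apply: even_sum => y /=.
by case: ifP => H; [apply: Hxy|].
Qed.

Lemma sign_id (s : 'S_N) (u w : W) :
  sp s w * sgn_pi k p (rs s u) (rs s w) *
    (-1) ^+ KW p (s^-1)%g (fun x => ((rs s u) (s x), w x)) =
  sp s u * sgn_pi k p u w.
Proof.
pose Q x := p (w x); pose P x := p (u x); pose R x := P x (+) Q x.
pose T1 (x y : 'I_N) := (if (x < y)%N && (s y < s x)%N then ((Q x && Q y) : nat) else 0%N).
pose T2 (x y : 'I_N) := (if (s x < s y)%N then ((Q x && P y) : nat) else 0%N).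
pose T3 (x y : 'I_N) := (if (s x < s y)%N && (y < x)%N then ((R x && R y) : nat) else 0%N).
pose T4 (x y : 'I_N) := (if (x < y)%N && (s y < s x)%N then ((P x && P y) : nat) else 0%N).
pose T5 (x y : 'I_N) := (if (x < y)%N then ((Q x && P y) : nat) else 0%N).
have e1 : (\sum_(i : 'I_N) \sum_(j : 'I_N | (i < j)%N && (s j < s i)%N) (p (w i) && p (w j))
           = \sum_x \sum_y T1 x y)%N.
  by apply: eq_bigr => x _; rewrite big_mkcond.
have e4 : (\sum_(i : 'I_N) \sum_(j : 'I_N | (i < j)%N && (s j < s i)%N) (p (u i) && p (u j))
           = \sum_x \sum_y T4 x y)%N.
  by apply: eq_bigr => x _; rewrite big_mkcond.
have e5 : (\sum_(i : 'I_N) \sum_(j : 'I_N | (i < j)%N) (p (w i) && p (u j))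
           = \sum_x \sum_y T5 x y)%N.
  by apply: eq_bigr => x _; rewrite big_mkcond.
have e2 : (\sum_(i : 'I_N) \sum_(j : 'I_N | (i < j)%N) (p (rs s w i) && p (rs s u j))
           = \sum_x \sum_y T2 x y)%N.
  rewrite (reindex_inj (@perm_inj _ s)) /=; apply: eq_bigr => x _.
  rewrite (reindex_inj (@perm_inj _ s)) /= big_mkcond; apply: eq_bigr => y _.
  by rewrite /rs !ffunE !permK.
have e3 : KW p (s^-1)%g (fun x => ((rs s u) (s x), w x)) = (\sum_x \sum_y T3 x y)%N.
  rewrite /KW /Kc (reindex_inj (@perm_inj _ s)) /=; apply: eq_bigr => x _.
  rewrite (reindex_inj (@perm_inj _ s)) /= big_mkcond; apply: eq_bigr => y _.
  rewrite !permK /rs !ffunE !permK /T3 andbC.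
  by case: ifP.
rewrite /sgn_perm /sgn_pi e1 e2 e3 e4 e5 -!exprD.
rewrite -[LHS]signr_odd -[RHS]signr_odd; congr (_ ^+ _).
have : ~~ odd (\sum_x \sum_y (T1 x y + T2 x y + T3 x y + (T4 x y + T5 x y)))%N.
  apply: sum_pairs.
    move=> x y Hxy.
    have nxy : (s x != s y :> nat).
      by rewrite val_eqE; apply/negP => /eqP /perm_inj E; move: Hxy; rewrite E ltnn.
    have hs : (s x < s y)%N = ~~ (s y < s x)%N by rewrite ltn_neqAle -leqNgt nxy.
    rewrite /T1 /T2 /T3 /T4 /T5 hs Hxy [(y < x)%N]ltnNge (ltnW Hxy) /= /R.
    by case: (s y < s x)%N; case: (P x); case: (P y); case: (Q x); case: (Q y).
  by move=> x; rewrite /T1 /T2 /T3 /T4 /T5 !ltnn.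
under eq_bigr => x _ do rewrite !big_split /=.
rewrite !big_split /= oddD.
by case: (odd (_ + _ + _)); case: (odd (_ + _)).
Qed.

Lemma sum3 (R : Type) (idx : R) (op : Monoid.com_law idx) (F : W * 'S_N * W -> R) :
  \big[op/idx]_(i : W * 'S_N * W) F i =
  \big[op/idx]_(a : W) \big[op/idx]_(s : 'S_N) \big[op/idx]_(w : W) F ((a, s), w).
Proof. by rewrite pair_bigA pair_bigA; apply: eq_bigr => [[[a s] w]]. Qed.

Lemma sum_if_eq (I : finType) (r : I) (H : I -> k) :
  \sum_(b : I) (if b == r then H b else 0) = H r.
Proof. by rewrite -big_mkcond big_pred1_eq. Qed.

Lemma rs_inj (s : 'S_N) : injective (rs s).
Proof.
move=> a b E; apply/ffunP => i; move/ffunP: E => /(_ (s i)).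
by rewrite !ffunE permK.
Qed.

Lemma ls_rs (s : 'S_N) (u : W) : ls s (rs s u) = u.
Proof. by apply/ffunP => i; rewrite !ffunE permK. Qed.

Lemma ac7 (F Nn g S1 T P1 K X Y : k) : S1 * P1 * K = X * Y ->
  F * (Nn * (g * (S1 * T))) * P1 * K = Nn * (g * (X * F)) * (T * Y).
Proof.
move=> H; rewrite -!mulrA mulrCA; congr (_ * _); rewrite mulrCA; congr (_ * _).
rewrite [X * _]mulrCA; congr (_ * _); rewrite mulrCA [X * _]mulrCA; congr (_ * _).
by rewrite mulrA.
Qed.

Local Notation RO := (@Rel_O k d p).

Lemma core_main (f t0 : Ten k d N) : inRperp p f -> in_ideal RO (cpi p f (cY p t0)).
Proof.
move=> Hf.
pose c1 (i : W * 'S_N * W) := f i.1.1 * ((N`!%:R)^-1 * (sg i.1.2 * (sp i.1.2 i.2 * t0 i.2)))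
   * sgn_pi k p i.1.1 (rs i.1.2 i.2).
pose Z1 (i : W * 'S_N * W) : fs k (seq (Gen d)) := [:: (1, zword i.1.1 (rs i.1.2 i.2))].
pose Z2 (i : W * 'S_N * W) : fs k (seq (Gen d)) :=
  [:: ((-1) ^+ KW p (i.1.2^-1)%g (fun x => (i.1.1 (i.1.2 x), i.2 x)), zword (ls i.1.2 i.1.1) i.2)].
have SA : fs_eq (cpi p f (cY p t0)) (lc c1 Z1).
  move=> m; rewrite fc_lc sum3 /coef /cpi big_allpairs_dep /=.
  rewrite big_enum /=; apply: eq_bigr => a _; rewrite big_enum /=.
  transitivity (\sum_(b : W) \sum_(s : 'S_N) \sum_(w : W) (if b == rs s w then
      (if zword a b == m then f a * ((N`!%:R)^-1 * (sg s * (sp s w * t0 w))) * sgn_pi k p a b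
       else 0) else 0)).
    apply: eq_bigr => b _; case: ifP => Hz; last first.
      by rewrite big1 // => s _; rewrite big1 // => w _; rewrite if_same.
    rewrite /cY ffunE !big_distrr /= big_distrl /=; apply: eq_bigr => s _.
    rewrite /cperm ffunE (big_distrr ((-1) ^+ odd_perm s)) /= big_distrr /= big_distrr /= big_distrl /=; apply: eq_bigr => w _.
    case: ifP => _; last by rewrite !mulr0 mul0r.
    by [].
  rewrite exchange_big /=; apply: eq_bigr => s _; rewrite exchange_big /=; apply: eq_bigr => w _.
  rewrite sum_if_eq big_cons big_nil /= addr0.
  by case: ifP; rewrite ?mulr1 ?mulr0.
have SB : eqv RO (lc c1 Z1) (lc c1 Z2).
  apply: eqv_lc => [[[a s] w]] /=.
  have := wordP k p (fun x => (a (s x), w x)) (s^-1)%g.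
  have -> : word (fun x => (a (s ((s^-1)%g x)), w ((s^-1)%g x))) = zword a (rs s w).
    by apply: eq_map => x; rewrite ffunE permKV.
  have -> : word (fun x => (a (s x), w x)) = zword (ls s a) w.
    by apply: eq_map => x; rewrite ffunE.
  done.
have SC : fs_eq (lc c1 Z2) [::].
  move=> m; rewrite fc_lc fc_nil sum3 exchange_big /=.
  transitivity (\sum_(s : 'S_N) \sum_(u : W) \sum_(w : W) (if zword u w == m then
      ((N`!%:R)^-1 * (sg s * (sp s u * f (rs s u)))) * (t0 w * sgn_pi k p u w) else 0)).
    apply: eq_bigr => s _; rewrite (reindex_inj (@rs_inj s)) /=.
    apply: eq_bigr => u _; apply: eq_bigr => w _.
    rewrite /coef big_cons big_nil addr0 /= ls_rs; case: ifP => _; last by rewrite mulr0.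
    by apply: ac7; apply: sign_id.
  rewrite exchange_big /=; apply: big1 => u _; rewrite exchange_big /=; apply: big1 => w _.
  have [H|H] := boolP (zword u w == m); last by rewrite big1 // => s _; rewrite (negbTE H).
  by rewrite -big_distrl /= ortho // mul0r.
apply: J_eq (fs_eq_sym SA) _; apply: J_eqv0.
by apply: eqv_trans SB _; apply: eqv_fseq (eqv_refl _ _) => //; apply: fs_eq_sym.
Qed.
End Core.

Lemma core (k : fieldType) (d N : nat) (p : 'I_d -> bool) (f v : Ten k d N) :
  inRperp p f -> inR p v -> in_ideal (@Rel_O k d p) (cpi p f v).
Proof. by move=> Hf [t ->]; apply: core_main. Qed.

Theorem mainTheorem17 (k : fieldType) (d N : nat) (p : 'I_d -> bool) :
  (forall q : nat, q \in [pchar k] -> (N < q)%N) ->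
  exists phi : Gen d -> fs k (seq (Gen d)),
    [/\ forall g : Gen d, fs_eq (phi g) (gen k g),
        is_sbialg_hom (parG p) (parG p) (@Rel_end k d N p) (@Rel_O k d p)
          (@DeltaGen k d) (@DeltaGen k d) (@epsGen k d) (@epsGen k d) phi
      & forall j : 'I_d, fs_eq (coact_restr phi j) (coact_target k j)].
Proof.
move=> _; exists (@gen k (Gen d)); split => //.
- split.
  + move=> g w; rewrite /gen /coef big_cons big_nil addr0.
    by case: ifP => [/eqP <- _|_]; rewrite ?eqxx //= addbF.
  + move=> r [f [v [Hf Hv ->]]]; rewrite phi_ext_gen; exact: core.
  + move=> g; rewrite Dext_gen phiphi_gen; exists [::], [::]; split; last split.
    by move=> t; rewrite in_nil.
    by move=> t; rewrite in_nil.
    by move=> w; rewrite fc_sub subrr fc_nil.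
  + by move=> g; rewrite /eext /gen big_cons big_nil big_cons big_nil addr0 mul1r mulr1.
- by move=> j; rewrite coact_gen.
Qed.
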